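(* For $k\in\mathbb N$ let $\overline Y^k_t:=(Y_t\wedge k)\vee(-k)$, $t\in[0,T]$. If $Y^*\in\mathcal L^1(\mathcal Q)$ and $\rho_{\mathcal Q}$ is continuous from above at $0$, then $$\lim_{k\to\infty}\sup_{\mathrm Q\in\overline{\mathcal Q}}\Big|\sup_{\tau\in\mathcal T}\mathbb E_{\mathrm Q}[Y_\tau]-\sup_{\tau\in\mathcal T}\mathbb E_{\mathrm Q}[\overline Y^k_\tau]\Big|=0.$$
   Context: Let $(\Omega,\mathcal F,(\mathcal F_t)_{0\le t\le T},\mathrm P)$ be a filtered probability space ($0<T<\infty$) with right-continuous filtration, $\mathcal F=\mathcal F_T$, $\mathcal F_0$ trivial and containing all $\mathrm P$-null sets. $\mathcal T$ is the set of stopping times $\tau\le T$. $\mathcal Q$ is a nonempty set of probability measures on $\mathcal F$, each absolutely continuous w.r.t. $\mathrm P$. $\mathcal L^1(\mathcal Q)$ is the set of random variables $X$ with $\sup_{\mathrm Q\in\mathcal Q}\mathbb E_{\mathrm Q}[|X|]<\infty$. $Y=(Y_t)_{0\le t\le T}$ is a right-continuous adapted process with bounded paths, quasi left-uppersemicontinuous w.r.t. $\mathrm P$, and $Y^*:=\sup_{t\in[0,T]}|Y_t|$. $\mathcal X$ is the set of random variables $X$ with $|X|\le C(Y^*+1)$ $\mathrm P$-a.s. for some $C>0$; $\rho_{\mathcal Q}(X)=\sup_{\mathrm Q\in\mathcal Q}\mathbb E_{\mathrm Q}[X]$ for $X\in\mathcal X$; $\rho_{\mathcal Q}$ is continuous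 from above at $0$ if $\rho_{\mathcal Q}(X_n)\searrow0$ whenever $X_n\in\mathcal X$, $X_n\searrow0$ $\mathrm P$-a.s. $\overline{\mathcal Q}$ is the set of probability measures $\mathrm Q$ on $\mathcal F$ such that every $X\in\mathcal X$ is $\mathrm Q$-integrable and $\mathbb E_{\mathrm Q}[X]\le\rho_{\mathcal Q}(X)$ for all $X\in\mathcal X$. *)

(* Defs.v *)
From HB Require Import structures.
From mathcomp Require Import all_boot all_order all_algebra.
From mathcomp Require Import all_classical all_reals all_analysis.
Set Implicit Arguments. Unset Strict Implicit. Unset Printing Implicit Defensive.
Import Order.TTheory GRing.Theory Num.Theory.
Import numFieldNormedType.Exports.
Local Open Scope classical_set_scope.
Local Open Scope ring_scope.

Section defs.
Context {d : measure_display} {Omega : measurableType d} {R : realType}.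

Definition filtration_std (P : probability Omega R) (T : R)
    (Ft : R -> set (set Omega)) : Prop :=
  [/\ (forall t, 0 <= t <= T -> sigma_algebra setT (Ft t)),
      (forall t, 0 <= t <= T -> Ft t `<=` measurable),
      (forall s t, 0 <= s -> s <= t -> t <= T -> Ft s `<=` Ft t) &
      (forall t, 0 <= t < T -> Ft t = \bigcap_(s in `]t, T]) Ft s)] /\
  [/\ Ft T = measurable,
      (forall A, Ft 0 A -> P A = 0%E \/ P A = 1%E) &
      (forall A, measurable A -> P A = 0%E -> Ft 0 A)].

Definition stopping_time (T : R) (Ft : R -> set (set Omega))
    (tau : Omega -> R) : Prop :=
  (forall w, 0 <= tau w <= T) /\
  (forall t, 0 <= t <= T -> Ft t [set w | tau w <= t]).

Definition stopping_times (T : R) (Ft : R -> set (set Omega)) :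
  set (Omega -> R) := [set tau | stopping_time T Ft tau].

Definition stopped (Y : R -> Omega -> R) (tau : Omega -> R) : Omega -> R :=
  fun w => Y (tau w) w.

Definition adapted (T : R) (Ft : R -> set (set Omega))
    (Y : R -> Omega -> R) : Prop :=
  forall t, 0 <= t <= T ->
    forall B : set R, measurable B -> Ft t (Y t @^-1` B).

Definition right_continuous_paths (T : R) (Y : R -> Omega -> R) : Prop :=
  forall w t, 0 <= t < T -> (Y ^~ w) x @[x --> t^'+] --> Y t w.

Definition bounded_paths (T : R) (Y : R -> Omega -> R) : Prop :=
  forall w, exists M : R, forall t, 0 <= t <= T -> `|Y t w| <= M.

Definition quasi_left_usc (P : probability Omega R) (T : R)
    (Ft : R -> set (set Omega)) (Y : R -> Omega -> R) : Prop :=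
  forall (taun : nat -> Omega -> R) (tau : Omega -> R),
    (forall n, stopping_time T Ft (taun n)) -> stopping_time T Ft tau ->
    (forall n w, taun n w <= taun n.+1 w) ->
    (forall w, taun ^~ w @ \oo --> tau w) ->
    {ae P, forall w, (limn_esup (fun n => (stopped Y (taun n) w)%:E)
                       <= (stopped Y tau w)%:E)%E}.

Definition Ystar (T : R) (Y : R -> Omega -> R) : Omega -> R :=
  fun w => sup [set `|Y t w| | t in `[0, T]].

Definition calX (P : probability Omega R) (T : R) (Y : R -> Omega -> R) :
  set (Omega -> R) :=
  [set X : Omega -> R | measurable_fun setT X /\
           exists C : R, 0 < C /\
             {ae P, forall w, `|X w| <= C * (Ystar T Y w + 1)}].

Definition rhoQ (QQ : set (probability Omega R)) (X : Omega -> R) : \bar R :=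
  ereal_sup [set (\int[Q]_w (X w)%:E)%E | Q in QQ].

Definition cont_from_above_at0 (P : probability Omega R) (T : R)
    (Y : R -> Omega -> R) (QQ : set (probability Omega R)) : Prop :=
  forall Xn : nat -> Omega -> R,
    (forall n, calX P T Y (Xn n)) ->
    {ae P, forall w, (forall n, Xn n.+1 w <= Xn n w) /\ Xn ^~ w @ \oo --> 0} ->
    (forall n, (rhoQ QQ (Xn n.+1) <= rhoQ QQ (Xn n))%E) /\
    rhoQ QQ \o Xn @ \oo --> 0%E.

Definition Qbar (P : probability Omega R) (T : R) (Y : R -> Omega -> R)
    (QQ : set (probability Omega R)) : set (probability Omega R) :=
  [set Q | forall X, calX P T Y X ->
      Q.-integrable setT (EFin \o X) /\
      (\int[Q]_w (X w)%:E <= rhoQ QQ X)%E].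

Definition Ytrunc (k : nat) (Y : R -> Omega -> R) : R -> Omega -> R :=
  fun t w => Num.max (Num.min (Y t w) k%:R) (- k%:R).

Definition optstop (T : R) (Ft : R -> set (set Omega))
    (Q : probability Omega R) (Y : R -> Omega -> R) : \bar R :=
  ereal_sup [set (\int[Q]_w (stopped Y tau w)%:E)%E
            | tau in stopping_times T Ft].

End defs.

(* Main.v *)
Set Warnings "-all".
Require Import Defs.
From HB Require Import structures.
From mathcomp Require Import all_boot all_order all_algebra.
From mathcomp Require Import all_classical all_reals all_analysis.
From mathcomp Require Import ring lra.
Import Order.TTheory GRing.Theory Num.Theory.
Import numFieldNormedType.Exports.
Local Open Scope classical_set_scope.
Local Open Scope ring_scope.

Lemma fin_abs_le {R : realType} (x y e : \bar R) :
  x \is a fin_num -> y \is a fin_num -> e \is a fin_num ->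
  (x <= y + e)%E -> (y <= x + e)%E -> (`|x - y| <= e)%E.
Proof.
move=> fx fy fe; rewrite -(fineK fx) -(fineK fy) -(fineK fe).
rewrite -!EFinD /= !lee_fin => h1 h2.
rewrite ler_norml; apply/andP; split; lra.
Qed.

Lemma abs_le_fin {R : realType} (x y e : \bar R) :
  x \is a fin_num -> y \is a fin_num -> e \is a fin_num ->
  (`|x - y| <= e)%E -> (x <= y + e)%E.
Proof.
move=> fx fy fe; rewrite -(fineK fx) -(fineK fy) -(fineK fe).
rewrite -!EFinD /= !lee_fin ler_norml => /andP[h1 h2]; lra.
Qed.

Lemma sup_diff {R : realType} {I : Type} (S : set I) (fa fb : I -> \bar R) (e c : \bar R) :
  S !=set0 -> e \is a fin_num -> c \is a fin_num ->
  (forall i, S i -> [/\ fa i \is a fin_num, fb i \is a fin_num,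
     (`|fa i - fb i| <= e)%E, (fa i <= c)%E & (fb i <= c)%E]) ->
  (`|ereal_sup (fa @` S) - ereal_sup (fb @` S)| <= e)%E.
Proof.
move=> [i0 Si0] fe fc h.
have key : forall ga gb : I -> \bar R, (forall i, S i -> [/\ ga i \is a fin_num,
     gb i \is a fin_num, (`|ga i - gb i| <= e)%E, (ga i <= c)%E & (gb i <= c)%E]) ->
    (ereal_sup (ga @` S) <= ereal_sup (gb @` S) + e)%E /\
    ereal_sup (ga @` S) \is a fin_num.
  move=> ga gb hg; split.
    apply: ge_ereal_sup => _ [i Si <-].
    have [fa' fb' hab _ _] := hg i Si.
    apply: (le_trans (abs_le_fin _ _ _ fa' fb' fe hab)).
    apply: leeD2r; apply: ereal_sup_ubound; by exists i.
  have [fa' _ _ _ _] := hg i0 Si0.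
  apply/fin_numPlt; apply/andP; split.
    apply: (lt_le_trans (_ : -oo < ga i0)%E); first by move: fa'; case/fin_numPlt/andP.
    by apply: ereal_sup_ubound; exists i0.
  apply: (le_lt_trans (_ : _ <= c)%E); last by move: fc; case/fin_numPlt/andP.
  by apply: ge_ereal_sup => _ [i Si <-]; have [] := hg i Si.
have [h1 f1] := key fa fb h.
have hba : forall i, S i -> [/\ fb i \is a fin_num, fa i \is a fin_num,
     (`|fb i - fa i| <= e)%E, (fb i <= c)%E & (fa i <= c)%E].
  move=> i Si; have [f1' f2' hab ? ?] := h i Si; split => //.
  by rewrite -abseN oppeB ?fin_num_adde_defr // addeC.
have [h2 f2] := key fb fa hba.
exact: fin_abs_le.
Qed.

Section proof.
Context {d : measure_display} {Omega : measurableType d} {R : realType}.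
Variables (P : probability Omega R) (T : R) (Ft : R -> set (set Omega)).
Variable (Y : R -> Omega -> R).
Hypothesis T0 : 0 < T.
Hypothesis hF : filtration_std P T Ft.
Hypothesis hA : adapted T Ft Y.
Hypothesis hRC : right_continuous_paths T Y.
Hypothesis hB : bounded_paths T Y.

Let NN (n : nat) : R := n.+1%:R.
Let gn (n : nat) (s : R) : R := (Num.ceil (s * NN n / T))%:~R * T / NN n.

Lemma NN_gt0 n : 0 < NN n. Proof. by rewrite /NN ltr0Sn. Qed.

Lemma gn_eq n s : gn n s - s = ((Num.ceil (s * NN n / T))%:~R - s * NN n / T) * (T / NN n).
Proof.
have := NN_gt0 n; have := T0; rewrite /gn => ? ?.
field; apply/andP; split; rewrite gt_eqF //.
Qed.

Lemma gn_ge n s : s <= gn n s.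
Proof.
rewrite -subr_ge0 gn_eq mulr_ge0 //; last by rewrite divr_ge0 // ltW // NN_gt0.
by rewrite subr_ge0 ceil_ge.
Qed.

Lemma gn_lt n s : gn n s - s < T / NN n.
Proof.
rewrite gn_eq gtr_pMl; last by rewrite divr_gt0 // NN_gt0.
move: (ceilB1_lt (s * NN n / T)); rewrite intrD /=; lra.
Qed.

Lemma gn_le n s : s <= T -> gn n s <= T.
Proof.
move=> sT; rewrite /gn ler_pdivrMr ?NN_gt0 // [T * _]mulrC ler_pM2r //.
have : s * NN n / T <= (n.+1%:Z)%:~R.
  rewrite -pmulrn ler_pdivrMr // [_ * T]mulrC ler_pM2r ?NN_gt0 //.
by rewrite -ceil_le_int => h; rewrite /NN pmulrn ler_int.
Qed.

Lemma gn_nat n s : 0 <= s -> exists j : nat, Num.ceil (s * NN n / T) = j%:Z.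
Proof.
move=> s0; have : 0 <= Num.ceil (s * NN n / T).
  have hx : 0 <= s * NN n / T.
    by rewrite divr_ge0 ?mulr_ge0 // ltW // NN_gt0.
  rewrite ceil_ge0; lra.
by case: (Num.ceil _) => // j _; exists j.
Qed.

Lemma gn_cvg s : gn n s @[n --> \oo] --> s.
Proof.
apply/cvgrPdist_lt => e e0.
have eT : 0 < e / T by rewrite divr_gt0.
apply: filterS (near_infty_natSinv_lt (PosNum eT)) => n /= hn.
rewrite distrC ger0_norm ?subr_ge0 ?gn_ge //.
apply: (lt_trans (gn_lt n s)).
have : T * n.+1%:R^-1 < T * (e / T) by rewrite ltr_pM2l.
by rewrite mulrCA divff ?gt_eqF // mulr1.
Qed.

Lemma Yg_cvg t w : 0 <= t <= T -> Y (gn n t) w @[n --> \oo] --> Y t w.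
Proof.
move=> /andP[t0 tT]; have [tlT|tgeT] := ltP t T; last first.
  have tE : t = T by apply: le_anti; rewrite tT tgeT.
  have gE : forall n, gn n t = t.
    by move=> n; apply: le_anti; rewrite gn_ge andbT tE gn_le.
  by under eq_fun do rewrite gE; apply: cvg_cst.
have := hRC w t; rewrite t0 tlT => /(_ isT) /cvgrPdist_lt h.
apply/cvgrPdist_lt => e e0; have [r /= r0 hr] := h e e0.
move: (gn_cvg t) => /cvgrPdist_lt /(_ r r0); apply: filterS => n hn.
case: (eqVneq (gn n t) t) => [->|ne]; first by rewrite subrr normr0.
by apply: hr => //; rewrite lt_neqAle eq_sym ne gn_ge.
Qed.

Lemma Fmeas t : 0 <= t <= T -> Ft t `<=` measurable.
Proof. by case: hF => -[_ h _ _] _; exact: h. Qed.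

Lemma Yt_meas t : 0 <= t <= T -> measurable_fun setT (Y t).
Proof. by move=> ht _ B mB; rewrite setTI; exact: (Fmeas t ht _ (hA t ht B mB)). Qed.

Lemma st_meas tau : stopping_time T Ft tau -> forall a, measurable [set w | tau w <= a].
Proof.
case=> hb hle a; have [a0|a0] := ltP a 0.
  rewrite (_ : [set w | tau w <= a] = set0) //; apply/seteqP; split => w //=.
  by have /andP[h1 h2] := hb w => h; lra.
have [aT|aT] := leP T a.
  rewrite (_ : [set w | tau w <= a] = setT) //; apply/seteqP; split => w //= _.
  by have /andP[h1 h2] := hb w; lra.
have ha : 0 <= a <= T by rewrite a0 ltW.
exact: (Fmeas a ha _ (hle a ha)).
Qed.

Lemma scale_lt m a x : (a < x * NN m / T) = (a * T / NN m < x).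
Proof. by rewrite ltr_pdivlMr // ltr_pdivrMr ?NN_gt0. Qed.

Lemma scale_le m a x : (x * NN m / T <= a) = (x <= a * T / NN m).
Proof. by rewrite ler_pdivrMr // ler_pdivlMr ?NN_gt0. Qed.

Lemma ceil_set_meas tau m (j : nat) : stopping_time T Ft tau ->
  measurable [set w | Num.ceil (tau w * NN m / T) = j%:Z].
Proof.
move=> hs.
rewrite (_ : [set w | _] = [set w | tau w <= j%:R * T / NN m] `\`
   [set w | tau w <= (j%:R - 1) * T / NN m]); last first.
  apply/seteqP; split => w /=.
    move/eqP; rewrite ceil_eq intrD /= -pmulrn mulrN1z => /andP[h1 h2].
    split; first by rewrite -scale_le.
    by apply/negP; rewrite -ltNge -scale_lt.
  rewrite -scale_le => -[h2 /negP]; rewrite -ltNge -scale_lt => h1; apply/eqP.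
  by rewrite ceil_eq intrD /= -pmulrn mulrN1z h1 h2.
by apply: measurableD; apply: st_meas.
Qed.

Lemma Ytau_meas tau : stopping_time T Ft tau -> measurable_fun setT (stopped Y tau).
Proof.
move=> hs; have hb := hs.1.
apply: (measurable_realfun.measurable_fun_cvg (h := fun n w => Y (gn n (tau w)) w)); last first.
  by move=> w _; apply: Yg_cvg.
move=> m _ B mB; rewrite setTI.
have -> : (fun w => Y (gn m (tau w)) w) @^-1` B = \bigcup_(j : nat)
    ([set w | Num.ceil (tau w * NN m / T) = j%:Z] `&`
     (Y (Num.min (j%:R * T / NN m) T)) @^-1` B).
  apply/seteqP; split => w /=.
    have /andP[h1 h2] := hb w.
    have [j hj] := gn_nat m (tau w) h1 => hYB; exists j => //; split => //.
    have gE : gn m (tau w) = j%:R * T / NN m by rewrite /gn hj pmulrn.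
    by rewrite -gE min_l // gn_le.
  move=> [j _ [hj hYB]].
  have /andP[h1 h2] := hb w.
  have gE : gn m (tau w) = j%:R * T / NN m by rewrite /gn hj pmulrn.
  by rewrite gE; move: hYB; rewrite -gE min_l // gn_le.
apply: bigcupT_measurable => j; apply: measurableI; first exact: ceil_set_meas.
have h : 0 <= Num.min (j%:R * T / NN m) T <= T.
  apply/andP; split; last by rewrite ge_min lexx orbT.
  by rewrite le_min (ltW T0) andbT divr_ge0 ?mulr_ge0 // ltW // NN_gt0.
by have := Yt_meas _ h measurableT _ mB; rewrite setTI.
Qed.

Lemma Ystar_hs w : has_sup [set `|Y t w| | t in `[0, T]].
Proof.
split.
  by exists `|Y 0 w|; exists 0 => //; rewrite /= in_itv /= lexx (ltW T0).
have [M hM] := hB w; exists M => _ [t ht <-]; apply: hM.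
by move: ht; rewrite /= in_itv.
Qed.

Lemma Ystar_ge t w : 0 <= t <= T -> `|Y t w| <= Ystar T Y w.
Proof.
move=> ht; apply: sup_upper_bound; first exact: Ystar_hs.
by exists t => //; rewrite /= in_itv.
Qed.

Lemma Ystar_ge0 w : 0 <= Ystar T Y w.
Proof. by apply: le_trans (Ystar_ge 0 w _); rewrite ?lexx ?(ltW T0). Qed.

Let Mn (n : nat) (w : Omega) : R :=
  \big[Num.max/0]_(j < n.+2) `|Y (Num.min (j%:R * T / NN n) T) w|.

Lemma min_in n (j : nat) : 0 <= Num.min (j%:R * T / NN n) T <= T.
Proof.
apply/andP; split; last by rewrite ge_min lexx orbT.
by rewrite le_min (ltW T0) andbT divr_ge0 ?mulr_ge0 // ltW // NN_gt0.
Qed.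

Lemma bigmax_meas k (F : nat -> Omega -> R) :
  (forall j, measurable_fun setT (F j)) ->
  measurable_fun setT (fun w => \big[Num.max/0]_(0 <= j < k) F j w).
Proof.
elim: k F => [|k IH] F hF'.
  rewrite (_ : (fun w => _) = fun=> 0); first exact: measurable_cst.
  by apply: funext => w; rewrite big_geq.
rewrite (_ : (fun w => _) = (fun w => Num.max (F 0%N w) (\big[Num.max/0]_(0 <= j < k) F j.+1 w))).
  apply: measurable_realfun.measurable_maxr => //.
  exact: (IH (fun j => F j.+1)).
by apply: funext => w; rewrite big_nat_recl.
Qed.

Lemma Mn_meas n : measurable_fun setT (Mn n).
Proof.
rewrite (_ : Mn n = fun w => \big[Num.max/0]_(0 <= j < n.+2) `|Y (Num.min (j%:R * T / NN n) T) w|).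
  apply: bigmax_meas => j.
  apply: measurableT_comp; first exact: measurable_realfun.normr_measurable.
  exact: Yt_meas (min_in _ _).
by apply: funext => w; rewrite /Mn big_mkord.
Qed.

Lemma Mn_le n w : Mn n w <= Ystar T Y w.
Proof.
by apply: bigmax_le => [|j _]; [exact: Ystar_ge0 | apply: Ystar_ge; exact: min_in].
Qed.

Lemma Mn_ge n t w : 0 <= t <= T -> `|Y (gn n t) w| <= Mn n w.
Proof.
move=> /andP[t0 tT]; have [j hj] := gn_nat n t t0.
have gE : gn n t = j%:R * T / NN n by rewrite /gn hj pmulrn.
have jn : (j < n.+2)%N.
  have := gn_le n t tT; rewrite gE ler_pdivrMr ?NN_gt0 // [T * _]mulrC ler_pM2r //.
  by rewrite /NN ler_nat ltnS.
have := le_bigmax 0 (fun j : 'I_n.+2 => `|Y (Num.min (j%:R * T / NN n) T) w|) (Ordinal jn).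
by rewrite /= -gE min_l // gn_le.
Qed.

Lemma Mn_cvg w : Mn n w @[n --> \oo] --> Ystar T Y w.
Proof.
apply/cvgrPdist_lt => e e0.
have [_ [t ht <-] hlt] := sup_adherent e0 (Ystar_hs w).
move: ht; rewrite /= in_itv /= => ht.
set del := `|Y t w| - (Ystar T Y w - e).
have del0 : 0 < del by rewrite /del subr_gt0.
move: (Yg_cvg t w ht) => /cvgrPdist_lt /(_ del del0); apply: filterS => n hn.
have h1 := Mn_le n w; have h2 := Mn_ge n t w ht.
have h3 := lerB_dist (Y t w) (Y (gn n t) w).
rewrite ger0_norm ?subr_ge0 //.
rewrite /del in hn; lra.
Qed.

Lemma Ystar_meas : measurable_fun setT (Ystar T Y).
Proof.
apply: (measurable_realfun.measurable_fun_cvg (h := Mn)); first exact: Mn_meas.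
by move=> w _; exact: Mn_cvg.
Qed.

Lemma trunc_meas k tau : stopping_time T Ft tau ->
  measurable_fun setT (stopped (Ytrunc k Y) tau).
Proof.
move=> hs; have h := Ytau_meas tau hs.
apply: (measurable_realfun.measurable_maxr
  (f := fun w => Num.min (stopped Y tau w) k%:R) (g := fun=> - k%:R)) => //.
exact: (measurable_realfun.measurable_minr (f := stopped Y tau) (g := fun=> k%:R)).
Qed.

Lemma trunc_diff (y z : R) (k : nat) : `|y| <= z ->
  `|y - Num.max (Num.min y k%:R) (- k%:R)| <= Num.max (z - k%:R) 0.
Proof.
move=> /ler_normlP[hy1 hy2].
have k0 : 0 <= k%:R :> R by [].
have hM1 : z - k%:R <= Num.max (z - k%:R) 0 by rewrite le_max lexx.
have hM0 : 0 <= Num.max (z - k%:R) 0 by rewrite le_max lexx orbT.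
move: (Num.max (z - k%:R) 0) hM1 hM0 => M hM1 hM0.
have [h1|h1] := leP y k%:R.
  have [h2|h2] := leP y (- k%:R).
    by apply/ler_normlP; split; lra.
  by apply/ler_normlP; split; lra.
have [h2|h2] := leP k%:R (- k%:R).
  by apply/ler_normlP; split; lra.
by apply/ler_normlP; split; lra.
Qed.

Let Xk (k : nat) (w : Omega) : R := Num.max (Ystar T Y w - k%:R) 0.

Lemma Xk_meas k : measurable_fun setT (Xk k).
Proof.
apply: (measurable_realfun.measurable_maxr (f := fun w => Ystar T Y w - k%:R) (g := fun=> 0)) => //.
apply: (measurable_realfun.measurable_funB (f := Ystar T Y) (g := fun=> k%:R)) => //.
exact: Ystar_meas.
Qed.

Lemma Xk_ge0 k w : 0 <= Xk k w.
Proof. by rewrite /Xk le_max lexx orbT. Qed.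

Lemma Xk_le k w : Xk k w <= Ystar T Y w.
Proof.
rewrite /Xk ge_max Ystar_ge0 andbT; have : 0 <= k%:R :> R by [].
by move=> h; rewrite lerBlDr lerDl.
Qed.

Lemma Ystar_calX : calX P T Y (Ystar T Y).
Proof.
split; first exact: Ystar_meas.
exists 1; split => //; apply: aeW => w.
by rewrite mul1r ger0_norm ?Ystar_ge0 // lerDl.
Qed.

Lemma Xk_calX k : calX P T Y (Xk k).
Proof.
split; first exact: Xk_meas.
exists 1; split => //; apply: aeW => w.
rewrite mul1r ger0_norm ?Xk_ge0 //; apply: (le_trans (Xk_le k w)).
by rewrite lerDl.
Qed.

Lemma trunc_abs (y : R) (k : nat) : `|Num.max (Num.min y k%:R) (- k%:R)| <= `|y|.
Proof.
have k0 : 0 <= k%:R :> R by [].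
have [y0|y0] := leP 0 y; [rewrite (ger0_norm y0) | rewrite (ltr0_norm y0)].
  have [h1|h1] := leP y k%:R; have [h2|h2] := leP y (- k%:R);
  have [h3|h3] := leP (k%:R : R) (- k%:R); rewrite ler_norml; apply/andP; split; lra.
have [h1|h1] := leP y k%:R; have [h2|h2] := leP y (- k%:R);
have [h3|h3] := leP (k%:R : R) (- k%:R); rewrite ler_norml; apply/andP; split; lra.
Qed.

Variable QQ : set (probability Omega R).

Local Notation mEF := measurable_realfun.measurable_EFinP.

Lemma int_bound Q tau k : Qbar P T Y QQ Q -> stopping_time T Ft tau ->
  [/\ (\int[Q]_w (stopped Y tau w)%:E)%E \is a fin_num,
      (\int[Q]_w (stopped (Ytrunc k Y) tau w)%:E)%E \is a fin_num,
      (`|\int[Q]_w (stopped Y tau w)%:E - \int[Q]_w (stopped (Ytrunc k Y) tau w)%:E|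
         <= \int[Q]_w (Xk k w)%:E)%E,
      (\int[Q]_w (stopped Y tau w)%:E <= \int[Q]_w (Ystar T Y w)%:E)%E &
      (\int[Q]_w (stopped (Ytrunc k Y) tau w)%:E <= \int[Q]_w (Ystar T Y w)%:E)%E].
Proof.
move=> hQ hs.
have iY := (hQ _ Ystar_calX).1.
have iX := (hQ _ (Xk_calX k)).1.
have hb := hs.1.
have bnd1 w : `|stopped Y tau w| <= Ystar T Y w := Ystar_ge (tau w) w (hb w).
have bnd2 w : `|stopped (Ytrunc k Y) tau w| <= Ystar T Y w.
  exact: le_trans (trunc_abs _ _) (bnd1 w).
have iYt : Q.-integrable setT (EFin \o stopped Y tau).
  apply: (@le_integrable _ _ _ Q setT measurableT (EFin \o stopped Y tau) _ _ _ iY).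
    by apply/mEF; exact: Ytau_meas.
  by move=> w _ /=; rewrite ?abse_EFin lee_fin (ger0_norm (Ystar_ge0 w)).
have iYk : Q.-integrable setT (EFin \o stopped (Ytrunc k Y) tau).
  apply: (@le_integrable _ _ _ Q setT measurableT (EFin \o stopped (Ytrunc k Y) tau) _ _ _ iY).
    by apply/mEF; exact: trunc_meas.
  by move=> w _ /=; rewrite ?abse_EFin lee_fin (ger0_norm (Ystar_ge0 w)).
split.
- exact: integrable_fin_num iYt.
- exact: integrable_fin_num iYk.
- rewrite -integralB_EFin //.
  under eq_integral do rewrite -EFinB.
  apply: le_trans (le_abse_integral _ _ _) _ => //.
    apply/mEF; apply: measurable_realfun.measurable_funB; [exact: Ytau_meas | exact: trunc_meas].
  under eq_integral do rewrite abse_EFin.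
  apply: ge0_le_integral => //.
  + apply/mEF; apply: measurableT_comp; first exact: measurable_realfun.normr_measurable.
    apply: measurable_realfun.measurable_funB; [exact: Ytau_meas | exact: trunc_meas].
  + by apply/mEF; exact: Xk_meas.
  + by move=> w _; rewrite lee_fin; exact: trunc_diff (bnd1 w).
- apply: le_integral => // w _; rewrite lee_fin; exact: le_trans (ler_norm _) (bnd1 w).
- apply: le_integral => // w _; rewrite lee_fin; exact: le_trans (ler_norm _) (bnd2 w).
Qed.

Hypothesis QQne : QQ !=set0.
Hypothesis hQP : forall Q, QQ Q -> Q `<< P.
Hypothesis hYs : (ereal_sup [set (\int[Q]_w `|Ystar T Y w|%:E)%E | Q in QQ] < +oo)%E.
Hypothesis hcont : cont_from_above_at0 P T Y QQ.

Lemma QQ_Qbar Q : QQ Q -> Qbar P T Y QQ Q.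
Proof.
move=> hQ X hX; split; last first.
  by rewrite /rhoQ; apply: ereal_sup_ubound; exists Q.
have [mX [C [C0 hae]]] := hX.
have haeQ : {ae Q, forall w, `|X w| <= C * (Ystar T Y w + 1)}.
  case: hae => A [mA PA0 sub]; exists A; split => //.
  have /null_content_dominatesP h := hQP Q hQ; exact: h A mA PA0.
have iY : Q.-integrable setT (EFin \o Ystar T Y).
  apply/integrableP; split; first by apply/mEF; exact: Ystar_meas.
  apply: le_lt_trans hYs; apply: ereal_sup_ubound; exists Q => //.
have ig : Q.-integrable setT (EFin \o (fun w => C * (Ystar T Y w + 1))).
  have ig0 := integrableZl measurableT C
    (integrableD measurableT iY (finite_measure_integrable_cst Q 1 measurableT)).
  apply: (eq_integrable measurableT _ _ _ ig0) => w _ /=.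
  by rewrite EFinM EFinD.
apply/integrableP; split; first by apply/mEF.
have -> : (\int[Q]_x `|(EFin \o X) x|)%E = (\int[Q]_x (`|X x|)%:E)%E.
  by apply: eq_integral => w _ /=.
apply: (le_lt_trans _ (integrable_lty measurableT ig)).

apply: ae_ge0_le_integral => //.
- apply/mEF; apply: measurableT_comp => //; exact: measurable_realfun.normr_measurable.
- move=> w _ /=; rewrite lee_fin; apply: mulr_ge0; [exact: ltW | apply: addr_ge0 => //; exact: Ystar_ge0].
- by apply/mEF; apply: measurable_realfun.measurable_funM => //; apply: measurable_realfun.measurable_funD => //; exact: Ystar_meas.
- by apply: filterS haeQ => w h _ /=; rewrite lee_fin.
Qed.

Lemma main_sec : (fun k : nat =>
     ereal_sup [set (`| optstop T Ft Q Y - optstop T Ft Q (Ytrunc k Y) |)%E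
               | Q in Qbar P T Y QQ]) @ \oo --> 0%E.
Proof.
have [Q0 hQ0] := QQne.
have hdec : {ae P, forall w, (forall n, Xk n.+1 w <= Xk n w) /\ Xk ^~ w @ \oo --> 0}.
  apply: aeW => w; split.
    move=> n; rewrite /Xk ge_max !le_max lexx !orbT andbT; apply/orP; left.
    by rewrite lerB // ler_nat.
  apply: cvg_near_cst; apply: filterS (nbhs_infty_ger (Ystar T Y w)) => n hn.
  by rewrite /Xk max_r // subr_le0.
have hc := hcont Xk (fun k => Xk_calX k) hdec.
apply: (squeeze_cvge (f := fun=> 0%E) (h := rhoQ QQ \o Xk)); last 2 first.
- exact: cvg_cst.
- exact: hc.2.
near=> k; apply/andP; split.
  apply: (le_trans (abse_ge0 (optstop T Ft Q0 Y - optstop T Ft Q0 (Ytrunc k Y)))).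
  by apply: ereal_sup_ubound; exists Q0 => //; exact: QQ_Qbar.
apply: ge_ereal_sup => _ [Q hQ <-].
apply: le_trans (hQ _ (Xk_calX k)).2.
have iX := (hQ _ (Xk_calX k)).1.
have iY := (hQ _ Ystar_calX).1.
apply: (@sup_diff _ _ _ _ _ _ (\int[Q]_w (Ystar T Y w)%:E)%E).
- exists (fun=> 0); split => [w|t ht]; first by rewrite lexx ltW.
  rewrite (_ : [set w | 0 <= t] = setT); last by apply/seteqP; split => w //= _; case/andP: ht.
  case: hF => -[hs _ _ _] _; have [h0 hC _] := hs t ht.
  by have := hC _ h0; rewrite setD0.
- by have h := integrable_fin_num measurableT iX; exact: h.
- by have h := integrable_fin_num measurableT iY; exact: h.
- move=> tau htau; have [? ? ? ? ?] := int_bound Q tau k hQ htau; by split.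
Unshelve. all: by end_near.
Qed.

End proof.

Theorem lemma6p3 (d : measure_display) (Omega : measurableType d)
  (R : realType) (P : probability Omega R) (T : R)
  (Ft : R -> set (set Omega)) (QQ : set (probability Omega R))
  (Y : R -> Omega -> R) :
  0 < T ->
  filtration_std P T Ft ->
  QQ !=set0 ->
  (forall Q, QQ Q -> Q `<< P) ->
  adapted T Ft Y ->
  right_continuous_paths T Y ->
  bounded_paths T Y ->
  quasi_left_usc P T Ft Y ->
  (* Y^* in L^1(Q) *)
  (ereal_sup [set (\int[Q]_w `|Ystar T Y w|%:E)%E | Q in QQ] < +oo)%E ->
  cont_from_above_at0 P T Y QQ ->
  (fun k : nat =>
     ereal_sup [set (`| optstop T Ft Q Y - optstop T Ft Q (Ytrunc k Y) |)%E
               | Q in Qbar P T Y QQ])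
    @ \oo --> 0%E.
Proof.
move=> T0 hF QQne hQP hA hRC hB _ hYs hc.
exact: (@main_sec _ _ _ P T Ft Y T0 hF hA hRC hB QQ QQne hQP hYs hc).
Qed.
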